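(* Consider the single-input single-output discrete-time closed-loop setting described in the context, fix $N$ finite and a DFT frequency $\omega_\ell$ at which $S(e^{j\omega_\ell})R(e^{j\omega_\ell})\neq 0$. Then, as $\sigma\to 0$ (Case 1, one experiment), \[ \sigma^{-1}(\widehat G_{\mathrm{dir}} - G) \leadsto \frac{1}{SR}\big(\bar V_y - G\bar V_u\big),\qquad \sigma^{-1}(\widehat G_{\mathrm{ind}} - G) \leadsto \frac{1}{S^2R}\bar V_y, \] where $\bar V_y,\bar V_u$ are zero-mean (statistically dependent) complex random variables with finite variances; and (Case 2, two independent experiments) \[ \sigma^{-1}(\widehat{\widehat G}_{\mathrm{io}} - G) \leadsto \frac{1}{SR}\big(\bar V_y^{(1)} - G\bar V_u^{(2)}\big), \] where $\bar V_y^{(1)}$ is independent of $\bar V_u^{(2)}$. Here $\leadsto$ denotes convergence in distribution.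
   Context: Setting: unit sample time, $\mathrm{q}$ the forward shift operator. Plant $G(\mathrm{q})$ and controller $C(\mathrm{q})$ are linear time-invariant and the closed-loop system is stable; $S = 1/(1+GC)$. Noise $v(k) = H(\mathrm{q})e(k)$ with $H$ a stable spectral factor, and $e(k) = \sigma\bar e(k)$ with $\bar e$ a zero-mean unit-variance white process whose distribution does not depend on $\sigma>0$. Reference $r(k)=r_2(k)+C(\mathrm{q})r_1(k)$ ($r_1,r_2$ known exogenous signals), $r$ periodic with period $N$. Plant output and input satisfy $y = SGr + Sv$, $u = Sr - SCv$. The data set $\{(r_k,u_k,y_k)\}_{k=0}^{N-1}$ is collected in steady state, consists of one period of $r$, and all records are time-synchronized with $r$. The $N$-point DFT is $X(e^{j\omega_\ell}) = N^{-1/2}\sum_{k=0}^{N-1}x_ke^{-j\omega_\ell k}$, $\omega_\ell=2\pi\ell/N$. At the fixed frequency, $G,S,C$ denote transfer function values at $e^{j\omega_\ell}$ and $R,U,Y$ the DFTs of $r,u,y$. The noise contributions $V_y,V_u$ are defined by $Y = SGR + V_y$, $U = SR + V_u$; they are linear in the noise and hence $\bar V_y := V_y/\sigma$, $\bar V_u := V_u/\sigma$ have distributions independent of $\sigma$. Estimators: $\widehat G_{\mathrm{dir}} := Y/U$; with $\widehat T_{yr} := Y/R$, $\widehat G_{\mathrm{ind}} := \widehat T_{yr}/(1-\widehat T_{yr}C)$. For Case 2, a second independent experiment with the same excitation $r$ is performed (identical deterministic parts, independent noise); $Y^{(1)}$ is the output DFT of experiment 1 with normalized noise contribution $\bar V_y^{(1)}$,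 $U^{(2)}$ the input DFT of experiment 2 with normalized noise contribution $\bar V_u^{(2)}$, and $\widehat{\widehat G}_{\mathrm{io}} := \dfrac{Y^{(1)}/R}{U^{(2)}/R}$. *)

(* Defs.v *)
From HB Require Import structures.
From mathcomp Require Import all_boot all_order all_algebra.
From mathcomp Require Import complex.
From mathcomp Require Import all_classical all_reals all_analysis.
Set Implicit Arguments. Unset Strict Implicit. Unset Printing Implicit Defensive.
Import Order.TTheory GRing.Theory Num.Theory ComplexField.
Import numFieldNormedType.Exports.
Local Open Scope classical_set_scope.
Local Open Scope ring_scope.

Definition reim {R : realType} (z : R[i]) : R * R := (complex.Re z, complex.Im z).

(* A complex random variable: measurable into R*R (= C with Borel sets). *)
Definition cmeasurable {R : realType} (d : measure_display) (T : measurableType d)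
  (X : T -> R[i]) : Prop :=
  measurable_fun setT (fun t => reim (X t)).

Definition cindep {R : realType} (d : measure_display) (T : measurableType d)
  (P : probability T R) (X Y : T -> R[i]) : Prop :=
  forall A B : set (R * R), measurable A -> measurable B ->
    P ((fun t => reim (X t)) @^-1` A `&` (fun t => reim (Y t)) @^-1` B)
    = (P ((fun t => reim (X t)) @^-1` A) * P ((fun t => reim (Y t)) @^-1` B))%E.

(* C carries no topology in the libraries, so
   continuity of f is expressed through the identification C = R * R
   (product topology = usual topology of C). *)
Definition cvg_distr_0 {R : realType} (d : measure_display) (T : measurableType d)
  (P : probability T R) (X : R -> T -> R[i]) (L : T -> R[i]) : Prop :=
  forall f : R[i] -> R, continuous (fun p : R * R => f (Complex p.1 p.2)) -> (exists M : R, forall z, `|f z| <= M) ->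
    (fun s : R => (\int[P]_t (f (X s t))%:E)%E) @ 0^'+ --> (\int[P]_t (f (L t))%:E)%E.

Definition sens {R : realType} (G C : R[i]) : R[i] := (1 + G * C)^-1.

(* DFT values of y and u at noise level sigma, with normalized noise contributions
   Vy, Vu (so that V_y = sigma Vy, V_u = sigma Vu). *)
Definition Ydft {R : realType} (G C Rr : R[i]) (s : R) (Vy : R[i]) : R[i] :=
  sens G C * G * Rr + (s%:C)%C * Vy.
Definition Udft {R : realType} (G C Rr : R[i]) (s : R) (Vu : R[i]) : R[i] :=
  sens G C * Rr + (s%:C)%C * Vu.

Definition Gdir {R : realType} (G C Rr : R[i]) (s : R) (Vy Vu : R[i]) : R[i] :=
  Ydft G C Rr s Vy / Udft G C Rr s Vu.
Definition Gind {R : realType} (G C Rr : R[i]) (s : R) (Vy : R[i]) : R[i] :=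
  let Tyr := Ydft G C Rr s Vy / Rr in Tyr / (1 - Tyr * C).
Definition Gio {R : realType} (G C Rr : R[i]) (s : R) (Vy1 Vu2 : R[i]) : R[i] :=
  (Ydft G C Rr s Vy1 / Rr) / (Udft G C Rr s Vu2 / Rr).

(* Main.v *)
Require Import Defs.
From HB Require Import structures.
From mathcomp Require Import all_boot all_order all_algebra.
From mathcomp Require Import complex.
From mathcomp Require Import all_classical all_reals all_analysis.
From mathcomp Require Import ring lra.
From mathcomp Require Import measurable_realfun.
Import Order.TTheory GRing.Theory Num.Theory ComplexField.
Import numFieldNormedType.Exports.
Local Open Scope classical_set_scope.
Local Open Scope ring_scope.
Section A.
Variable R : realType.

Lemma open_prod_measurable (U : set (R * R)) : open U -> measurable U.
Proof.
move=> oU.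
pose sq (a b c : rat) : set (R * R) := ball (ratr a : R, ratr b : R) (ratr c : R).
have msq a b c : measurable (sq a b c).
  have -> : sq a b c = ball (ratr a : R) (ratr c) `*` ball (ratr b : R) (ratr c).
    by apply/seteqP; split => p.
  by apply: measurableX; exact: measurable_ball.
have -> : U = \bigcup_(a : rat) \bigcup_(b : rat) \bigcup_(c : rat)
    (if asbool (sq a b c `<=` U) then sq a b c else set0).
  apply/seteqP; split => [p Up|p]; last first.
    move=> [a _ [b _ [c _]]]; case: asboolP => // H; exact: H.
  have : nbhs p U by apply: open_nbhs_nbhs; split.
  move/nbhs_ballP => [e /= e0 peU].
  have e4 : 0 < e / 4 by rewrite divr_gt0.
  have [a /andP[a1 a2]] : exists a : rat, ratr a \in `]p.1 - e / 4, p.1 + e / 4[.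
    by apply: rat_in_itvoo; lra.
  have [b /andP[b1 b2]] : exists a : rat, ratr a \in `]p.2 - e / 4, p.2 + e / 4[.
    by apply: rat_in_itvoo; lra.
  have [c /andP[c1 c2]] : exists a : rat, ratr a \in `]e / 4, e / 2[.
    by apply: rat_in_itvoo; lra.
  move: a1 a2 b1 b2 c1 c2; rewrite !bnd_simp => a1 a2 b1 b2 c1 c2.
  exists a => //; exists b => //; exists c => //.
  case: asboolP => [_|]; last first.
    move=> H; exfalso; apply: H => q [/= q1 q2]; apply: peU; split => /=.
      rewrite /ball /= in q1 *.
      move: q1; rewrite !ltr_norml => /andP[? ?]; apply/andP; split; lra.
    rewrite /ball /= in q2 *.
    move: q2; rewrite !ltr_norml => /andP[? ?]; apply/andP; split; lra.
  split => /=; rewrite /ball /= ltr_norml; apply/andP; split; lra.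
apply: bigcupT_measurable_rat => a; apply: bigcupT_measurable_rat => b.
apply: bigcupT_measurable_rat => c; case: asboolP => _ //.
Qed.

Lemma cont_prod_measurable (F : R * R -> R) : continuous F -> measurable_fun setT F.
Proof.
move=> /continuousP cF; apply: (measurability _ (RGenOpens.measurableE R)).
move=> _ [_ [a [b ->] <-]]; rewrite setTI; apply: open_prod_measurable.
exact/cF/interval_open.
Qed.
End A.
Section B.
Variable R : realType.

Lemma measurable_inv : measurable_fun setT (fun x : R => x^-1).
Proof.
apply: (@measurable_fun_cvg _ R R setT (fun n x => x / (x * x + (n.+1%:R)^-1)) (fun x => x^-1)).
  move=> n; apply: continuous_measurable_fun => x.
  apply: cvgM; first exact: cvg_id.
  apply: cvgV.
    have h : 0 < x * x + n.+1%:R^-1.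
      by apply: ltr_wpDl; [by rewrite -expr2 sqr_ge0 | rewrite invr_gt0 ltr0n].
    by rewrite gt_eqF.
  by apply: cvgD; [apply: cvgM; exact: cvg_id | exact: cvg_cst].
move=> x _.
have [->|x0] := eqVneq x 0.
  rewrite invr0; under eq_fun do rewrite mul0r; exact: cvg_cst.
have -> : x^-1 = x / (x * x + 0) by rewrite addr0 invfM mulrA divff // mul1r.
apply: cvgM; first exact: cvg_cst.
apply: cvgV; first by rewrite addr0 mulf_neq0.
apply: cvgD; first exact: cvg_cst.
exact: cvg_harmonic.
Qed.

Lemma ReD (x y : R[i]) : complex.Re (x + y) = complex.Re x + complex.Re y.
Proof. by case: x; case: y. Qed.
Lemma ImD (x y : R[i]) : complex.Im (x + y) = complex.Im x + complex.Im y.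
Proof. by case: x; case: y. Qed.
Lemma ReN (x : R[i]) : complex.Re (- x) = - complex.Re x.
Proof. by case: x. Qed.
Lemma ImN (x : R[i]) : complex.Im (- x) = - complex.Im x.
Proof. by case: x. Qed.
Lemma ReM (x y : R[i]) : complex.Re (x * y) =
  complex.Re x * complex.Re y - complex.Im x * complex.Im y.
Proof. by case: x; case: y. Qed.
Lemma ImM (x y : R[i]) : complex.Im (x * y) =
  complex.Re x * complex.Im y + complex.Im x * complex.Re y.
Proof. by case: x; case: y. Qed.
Lemma ReV (x : R[i]) : complex.Re (x^-1) =
  complex.Re x / (complex.Re x * complex.Re x + complex.Im x * complex.Im x).
Proof. by case: x. Qed.
Lemma ImV (x : R[i]) : complex.Im (x^-1) =
  - (complex.Im x / (complex.Re x * complex.Re x + complex.Im x * complex.Im x)).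
Proof. by case: x. Qed.

Context d (T : measurableType d).
Implicit Types X Y : T -> R[i].

Lemma cmeasP X : cmeasurable X <->
  measurable_fun setT (fun t => complex.Re (X t)) /\
  measurable_fun setT (fun t => complex.Im (X t)).
Proof. exact: measurable_fun_pairP. Qed.

Lemma cmeas_cst (k : R[i]) : cmeasurable (fun _ : T => k).
Proof. by apply/cmeasP; split; exact: measurable_cst. Qed.

Lemma cmeasD X Y : cmeasurable X -> cmeasurable Y -> cmeasurable (fun t => X t + Y t).
Proof.
move=> /cmeasP[? ?] /cmeasP[? ?]; apply/cmeasP; split.
  under eq_fun do rewrite ReD; exact: measurable_funD.
under eq_fun do rewrite ImD; exact: measurable_funD.
Qed.

Lemma cmeasN X : cmeasurable X -> cmeasurable (fun t => - X t).
Proof.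
move=> /cmeasP[? ?]; apply/cmeasP; split.
  under eq_fun do rewrite ReN; exact: measurable_funN.
under eq_fun do rewrite ImN; exact: measurable_funN.
Qed.

Lemma cmeasM X Y : cmeasurable X -> cmeasurable Y -> cmeasurable (fun t => X t * Y t).
Proof.
move=> /cmeasP[? ?] /cmeasP[? ?]; apply/cmeasP; split.
  under eq_fun do rewrite ReM.
  by apply: measurable_funB; apply: measurable_funM.
under eq_fun do rewrite ImM.
by apply: measurable_funD; apply: measurable_funM.
Qed.

Lemma cmeasV X : cmeasurable X -> cmeasurable (fun t => (X t)^-1).
Proof.
move=> /cmeasP[? ?].
have mn : measurable_fun setT (fun t => (complex.Re (X t) * complex.Re (X t) +
    complex.Im (X t) * complex.Im (X t))^-1).
  apply: (measurableT_comp measurable_inv).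
  by apply: measurable_funD; apply: measurable_funM.
apply/cmeasP; split.
  under eq_fun do rewrite ReV.
  exact: measurable_funM.
under eq_fun do rewrite ImV.
by apply: measurable_funN; apply: measurable_funM.
Qed.

End B.
Section C.
Variable R : realType.
Context {U : Type} (F : set_system U) {FF : ProperFilter F}.

Definition ccvg (z : U -> R[i]) (z0 : R[i]) :=
  (fun s => complex.Re (z s)) @ F --> complex.Re z0 /\
  (fun s => complex.Im (z s)) @ F --> complex.Im z0.

Lemma ccvg_cst (k : R[i]) : ccvg (fun _ => k) k.
Proof. by split; exact: cvg_cst. Qed.

Lemma ccvgD z w z0 w0 : ccvg z z0 -> ccvg w w0 -> ccvg (fun s => z s + w s) (z0 + w0).
Proof.
move=> [? ?] [? ?]; split.
  under eq_fun do rewrite ReD; rewrite ReD; exact: cvgD.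
under eq_fun do rewrite ImD; rewrite ImD; exact: cvgD.
Qed.

Lemma ccvgM z w z0 w0 : ccvg z z0 -> ccvg w w0 -> ccvg (fun s => z s * w s) (z0 * w0).
Proof.
move=> [? ?] [? ?]; split.
  under eq_fun do rewrite ReM; rewrite ReM; by apply: cvgB; apply: cvgM.
under eq_fun do rewrite ImM; rewrite ImM; by apply: cvgD; apply: cvgM.
Qed.

Lemma normsq_neq0 (z0 : R[i]) : z0 != 0 ->
  complex.Re z0 * complex.Re z0 + complex.Im z0 * complex.Im z0 != 0.
Proof.
case: z0 => a b /= nz; apply/negP => /eqP H; move/negP: nz; apply.
have a0 : a * a = 0 by apply/eqP; rewrite -sqrf_eq0 ?expr2; nra.
have b0 : b * b = 0 by nra.
by move/eqP: a0; rewrite mulf_eq0 orbb => /eqP ->; move/eqP: b0; rewrite mulf_eq0 orbb => /eqP ->.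
Qed.

Lemma ccvgV z z0 : z0 != 0 -> ccvg z z0 -> ccvg (fun s => (z s)^-1) (z0^-1).
Proof.
move=> nz [? ?].
have hn : (fun s => (complex.Re (z s) * complex.Re (z s) + complex.Im (z s) * complex.Im (z s))^-1)
   @ F --> (complex.Re z0 * complex.Re z0 + complex.Im z0 * complex.Im z0)^-1.
  by apply: cvgV; [exact: normsq_neq0 | apply: cvgD; apply: cvgM].
split.
  under eq_fun do rewrite ReV; rewrite ReV; exact: cvgM.
under eq_fun do rewrite ImV; rewrite ImV; by apply: cvgN; apply: cvgM.
Qed.

Lemma ccvg_neq0 z z0 : z0 != 0 -> ccvg z z0 -> \forall s \near F, z s != 0.
Proof.
move=> nz [h1 h2].
have hn : (fun s => complex.Re (z s) * complex.Re (z s) + complex.Im (z s) * complex.Im (z s))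
   @ F --> (complex.Re z0 * complex.Re z0 + complex.Im z0 * complex.Im z0).
  by apply: cvgD; apply: cvgM.
have pos : 0 < complex.Re z0 * complex.Re z0 + complex.Im z0 * complex.Im z0.
  by rewrite lt0r normsq_neq0 //= addr_ge0 // -expr2 sqr_ge0.
apply: filterS (cvgr_gt _ hn _ pos) => s /= Hs.
apply/negP => /eqP H; move: Hs; rewrite H /=; rewrite !mul0r addr0 ltxx.
done.
Qed.

Lemma ccvg_near z1 z2 z0 : (\forall s \near F, z1 s = z2 s) -> ccvg z1 z0 -> ccvg z2 z0.
Proof.
move=> e [h1 h2]; split.
  apply: cvg_trans h1; apply: near_eq_cvg; apply: filterS e => s /= ->; done.
apply: cvg_trans h2; apply: near_eq_cvg; apply: filterS e => s /= ->; done.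
Qed.
End C.
Arguments ccvg {R U} F z z0.

Lemma ccvg_real (R : realType) (c : R[i]) :
  ccvg (0 : R)^'+ (fun s => (s%:C)%C * c) 0.
Proof.
have h : (fun s : R => s) @ 0^'+ --> (0 : R) by apply: cvg_at_right_filter; exact: cvg_id.
split.
  under eq_fun do rewrite ReM /=.
  rewrite (_ : complex.Re 0 = 0 * complex.Re c - 0 * complex.Im c); last by rewrite !mul0r subr0.
  by apply: cvgB; apply: cvgM => //; exact: cvg_cst.
under eq_fun do rewrite ImM /=.
rewrite (_ : complex.Im 0 = 0 * complex.Im c + 0 * complex.Re c); last by rewrite !mul0r addr0.
by apply: cvgD; apply: cvgM => //; exact: cvg_cst.
Qed.

Lemma ccvg_key (R : realType) (a b c : R[i]) : b != 0 ->
  ccvg (0 : R)^'+ (fun s => a / (b + (s%:C)%C * c)) (a / b).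
Proof.
move=> b0; apply: ccvgM; first exact: ccvg_cst.
apply: ccvgV => //.
rewrite -[X in ccvg _ _ X]addr0; apply: ccvgD; first exact: ccvg_cst.
exact: ccvg_real.
Qed.
Lemma cvg_pairR (R : realType) (a b : nat -> R) (x y : R) : a n @[n --> \oo] --> x -> b n @[n --> \oo] --> y -> (a n, b n) @[n --> \oo] --> (x, y).
Proof. move=> ha hb. exact: (cvg_pair ha hb). Qed.

Lemma distr_main (R : realType) (d : measure_display) (T : measurableType d)
  (P : probability T R) (X : R -> T -> R[i]) (L : T -> R[i]) :
  (forall s, 0 < s -> cmeasurable (X s)) -> cmeasurable L ->
  (forall t, ccvg (0 : R)^'+ (fun s => X s t) (L t)) -> cvg_distr_0 P X L.
Proof.
move=> mX mL cX f cf [M fM].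
pose Fp := fun p : R * R => f (Complex p.1 p.2).
have fF z : f z = Fp (reim z) by case: z.
have mF := @cont_prod_measurable R Fp cf.
have mfX s : 0 < s -> measurable_fun setT (fun t => (f (X s t))%:E).
  move=> s0; apply/measurable_EFinP; under eq_fun do rewrite fF.
  exact: (measurableT_comp mF (mX s s0)).
have mfL : measurable_fun setT (fun t => (f (L t))%:E).
  apply/measurable_EFinP; under eq_fun do rewrite fF.
  exact: (measurableT_comp mF mL).
have intM : P.-integrable setT (EFin \o cst M).
  exact: finite_measure_integrable_cst.
have intL : P.-integrable setT (fun t => (f (L t))%:E).
  apply: (le_integrable _ mfL _ intM) => // t _ /=.
  by rewrite lee_fin (le_trans (fM _)) // ler_norm.
have finL := integrable_fin_num measurableT intL.
rewrite -(fineK finL); apply/cvge_at_rightP => u [u0 uc].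
rewrite fineK //.
apply: (@dominated_cvg _ _ _ P setT measurableT _ _ (EFin \o cst M)).
- by move=> n; exact: mfX.
- move=> t _.
  apply: (@cvg_EFin R nat \oo _ (fun n => (f (X (u n) t))%:E) (f (L t))); first exact: nearW.
  rewrite /comp /=.
  under eq_fun do rewrite fF.
  rewrite fF.
  apply: (@cvg_comp _ _ _ (fun n => reim (X (u n) t)) Fp \oo (nbhs (reim (L t))) _ _ (cf _)).
  have [c1 c2] := cX t.
  rewrite /reim; apply: cvg_pairR.
    by move/cvg_at_rightP: c1; apply; split.
  by move/cvg_at_rightP: c2; apply; split.
- by [].
- exact: intM.
- by move=> n t _ /=; rewrite lee_fin fM.
Qed.
Lemma case_gen (R : realType) (d : measure_display) (T : measurableType d)
  (P : probability T R) (X : R -> T -> R[i]) (a c : T -> R[i]) (b : R[i]) (L : T -> R[i]) :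
  b != 0 -> (forall s, 0 < s -> cmeasurable (X s)) -> cmeasurable L ->
  (forall t, L t = a t / b) ->
  (forall s t, 0 < s -> b + (s%:C)%C * c t != 0 -> X s t = a t / (b + (s%:C)%C * c t)) ->
  cvg_distr_0 P X L.
Proof.
move=> b0 mX mL hL hX; apply: distr_main => // t.
rewrite hL.
have K := @ccvg_key R (a t) b (c t) b0.
have hw : ccvg (0 : R)^'+ (fun s => b + (s%:C)%C * c t) b.
  by rewrite -[X in ccvg _ _ X]addr0; apply: ccvgD; [exact: ccvg_cst | exact: ccvg_real].
have nz : \forall s \near (0 : R)^'+, b + (s%:C)%C * c t != 0.
  exact: (@ccvg_neq0 R _ _ (at_right_proper_filter 0) _ _ b0 hw).
have e : \forall s \near (0 : R)^'+, a t / (b + (s%:C)%C * c t) = X s t.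
  near=> s.
  have s0 : 0 < s by near: s; exact: nbhs_right_gt.
  have w0 : b + (s%:C)%C * c t != 0 by near: s; exact: nz.
  by rewrite hX.
exact: (@ccvg_near R _ _ (at_right_proper_filter 0) _ _ _ e K).
Unshelve. all: by end_near.
Qed.
Ltac cm := first
  [ lazymatch goal with |- cmeasurable (fun _ => ?k) => exact: cmeas_cst end
  | lazymatch goal with
    | |- cmeasurable (fun t => _ + _) => apply: cmeasD; cm
    | |- cmeasurable (fun t => _ * _) => apply: cmeasM; cm
    | |- cmeasurable (fun t => (_)^-1) => apply: cmeasV; cm
    | |- cmeasurable (fun t => - _) => apply: cmeasN; cm
    | |- _ => assumption
    end ].

Lemma gind_id (R : realType) (G C Rr Vy sC : R[i]) : 1 + G * C != 0 -> Rr != 0 -> sC != 0 ->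
  (1 + G * C)^-1 ^+ 2 + sC * - ((1 + G * C)^-1 * Vy * C / Rr) != 0 ->
  Vy / Rr / ((1 + G * C)^-1 ^+ 2 + sC * - ((1 + G * C)^-1 * Vy * C / Rr)) =
  sC^-1 * (let Tyr := ((1 + G * C)^-1 * G * Rr + sC * Vy) / Rr in Tyr / (1 - Tyr * C) - G).
Proof.
move=> g0 R0 s0 w0 /=.
have e : 1 - ((1 + G * C)^-1 * G * Rr + sC * Vy) / Rr * C = ((1 + G * C)^-1 ^+ 2 + sC * - ((1 + G * C)^-1 * Vy * C / Rr)) * (1 + G * C).
  field.
  by rewrite g0 R0.
have d0 : 1 - ((1 + G * C)^-1 * G * Rr + sC * Vy) / Rr * C != 0.
  by rewrite e mulf_neq0.
field.
have -> : (1 + G * C) * Rr - (G * Rr + sC * Vy * (1 + G * C)) * C =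
   Rr * (1 + G * C) * (1 - ((1 + G * C)^-1 * G * Rr + sC * Vy) / Rr * C).
  by field; rewrite g0 R0.
by rewrite R0 g0 s0 !mulf_neq0.
Qed.

Theorem lemma1 (R : realType) (d : measure_display) (T : measurableType d)
  (P : probability T R) (G C Rr : R[i]) (Vy Vu Vy1 Vu2 : T -> R[i]) :
  sens G C * Rr != 0 ->
  cmeasurable Vy -> cmeasurable Vu -> cmeasurable Vy1 -> cmeasurable Vu2 ->
  cindep P Vy1 Vu2 ->
  [/\ cvg_distr_0 P (fun s t => ((s^-1)%:C)%C * (Gdir G C Rr s (Vy t) (Vu t) - G))
        (fun t => (sens G C * Rr)^-1 * (Vy t - G * Vu t)),
      cvg_distr_0 P (fun s t => ((s^-1)%:C)%C * (Gind G C Rr s (Vy t) - G))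
        (fun t => (sens G C ^+ 2 * Rr)^-1 * Vy t)
    & cvg_distr_0 P (fun s t => ((s^-1)%:C)%C * (Gio G C Rr s (Vy1 t) (Vu2 t) - G))
        (fun t => (sens G C * Rr)^-1 * (Vy1 t - G * Vu2 t))].
Proof.
move=> SR0 mVy mVu mVy1 mVu2 _.
have [S0 R0] : sens G C != 0 /\ Rr != 0.
  by move: SR0; rewrite mulf_eq0 negb_or => /andP.
have g0 : 1 + G * C != 0.
  by apply: contra S0 => /eqP h; rewrite /sens h invr0.
have sCE (s : R) : ((s^-1)%:C)%C = ((s%:C)%C)^-1 by rewrite fmorphV.
have sC0 (s : R) : 0 < s -> (s%:C)%C != 0 :> R[i].
  by move=> s0; rewrite (inj_eq (@complexI R)) gt_eqF.
split.
- apply: (@case_gen R d T P _ (fun t => Vy t - G * Vu t) Vu (sens G C * Rr)) => //.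
  + by move=> s _; rewrite /Gdir /Ydft /Udft; cm.
  + by cm.
  + by move=> t; rewrite mulrC.
  + move=> s t s0 w0; rewrite sCE /Gdir /Ydft /Udft.
    by field; rewrite w0 sC0.
- apply: (@case_gen R d T P _ (fun t => Vy t / Rr)
     (fun t => - (sens G C * Vy t * C / Rr)) (sens G C ^+ 2)) => //.
  + by rewrite expf_neq0.
  + by move=> s _; rewrite /Gind /Ydft /=; cm.
  + by cm.
  + by move=> t; field; rewrite S0 R0.
  + move=> s t s0 w0; rewrite sCE /Gind /Ydft.
    rewrite /sens in w0 *; symmetry; apply: gind_id => //; exact: sC0.
- apply: (@case_gen R d T P _ (fun t => Vy1 t - G * Vu2 t) Vu2 (sens G C * Rr)) => //.
  + by move=> s _; rewrite /Gio /Ydft /Udft; cm.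
  + by cm.
  + by move=> t; rewrite mulrC.
  + move=> s t s0 w0; rewrite sCE /Gio /Ydft /Udft.
    by field; rewrite ?w0 ?R0 ?sC0.
Qed.
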